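(* Let $V(t),t\in\mathbb{Z}^d$, be a non-negative rf and $\|\cdot\|$ a norm on $\mathbb{R}^d$. Then $P(\lim_{\|t\|\to\infty}V(t)=0)=1$ if and only if there exists a non-decreasing sequence of integers $r_n\to\infty$ such that for every $\delta>0$, $$\lim_{m\to\infty}\limsup_{n\to\infty}P\Big(\max_{m\le\|t\|\le r_n}V(t)>\delta\Big)=0.$$ *)

(* Defs.v *)
From Stdlib Require Import Reals Lra Lia ZArith.
Open Scope R_scope.

(* Probability space (Omega, F, P). Events are predicates on Omega;
   P is only constrained on measurable events. *)
Record prob_space := {
  Omega :> Type;
  measurable : (Omega -> Prop) -> Prop;
  meas_full : measurable (fun _ => True);
  meas_compl : forall A, measurable A -> measurable (fun w => ~ A w);
  meas_union : forall A : nat -> Omega -> Prop,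
      (forall n, measurable (A n)) -> measurable (fun w => exists n, A n w);
  P : (Omega -> Prop) -> R;
  P_nonneg : forall A, measurable A -> 0 <= P A;
  P_full : P (fun _ => True) = 1;
  P_sigma_additive : forall A : nat -> Omega -> Prop,
      (forall n, measurable (A n)) ->
      (forall n m w, n <> m -> A n w -> A m w -> False) ->
      infinite_sum (fun n => P (A n)) (P (fun w => exists n, A n w))
}.

Definition fin (d : nat) := { i : nat | (i < d)%nat }.
Definition Rd (d : nat) := fin d -> R.
Definition Zd (d : nat) := fin d -> Z.
Definition Rd_add {d} (x y : Rd d) : Rd d := fun i => x i + y i.
Definition Rd_scale {d} (c : R) (x : Rd d) : Rd d := fun i => c * x i.
Definition Zd_to_Rd {d} (t : Zd d) : Rd d := fun i => IZR (t i).

Definition is_norm {d} (N : Rd d -> R) : Prop :=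
  (forall x, 0 <= N x) /\
  (forall x, N x = 0 -> forall i, x i = 0) /\
  (forall c x, N (Rd_scale c x) = Rabs c * N x) /\
  (forall x y, N (Rd_add x y) <= N x + N y).

Definition random_variable (Pr : prob_space) (X : Pr -> R) : Prop :=
  forall a : R, measurable Pr (fun w => X w <= a).

Definition random_field (Pr : prob_space) {d} (V : Zd d -> Pr -> R) : Prop :=
  forall t, random_variable Pr (V t).

Definition is_limsup (a : nat -> R) (l : R) : Prop :=
  forall eps, 0 < eps ->
    (exists N, forall n, (n >= N)%nat -> a n < l + eps) /\
    (forall N, exists n, (n >= N)%nat /\ l - eps < a n).

Definition tends_to_zero_at_infinity {d} (N : Rd d -> R) (f : Zd d -> R) : Prop :=
  forall eps, 0 < eps -> exists M, forall t, M < N (Zd_to_Rd t) -> Rabs (f t) < eps.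

Definition max_exceeds {Pr : prob_space} {d} (N : Rd d -> R) (V : Zd d -> Pr -> R)
  (m : nat) (r : Z) (delta : R) : Pr -> Prop :=
  fun w => exists t, INR m <= N (Zd_to_Rd t) <= IZR r /\ delta < V t w.

(* Main.v *)
Require Import Defs.
From Stdlib Require Import Reals ZArith Lra Lia Cantor Classical FunctionalExtensionality PropExtensionality ProofIrrelevance.
Open Scope R_scope.

Lemma P_ext (Pr : prob_space) (A B : Pr -> Prop) :
  (forall w, A w <-> B w) -> P Pr A = P Pr B.
Proof.
  intros H. assert (A = B) as ->; [|reflexivity].
  apply functional_extensionality; intros w; apply propositional_extensionality; auto.
Qed.

Lemma meas_ext (Pr : prob_space) (A B : Pr -> Prop) :
  (forall w, A w <-> B w) -> measurable Pr A -> measurable Pr B.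
Proof.
  intros H. assert (A = B) as ->; [|auto].
  apply functional_extensionality; intros w; apply propositional_extensionality; auto.
Qed.

Lemma meas_empty (Pr : prob_space) : measurable Pr (fun _ => False).
Proof.
  apply (meas_ext Pr (fun w => ~ True)); [tauto|]. apply meas_compl, meas_full.
Qed.

Lemma meas_inter (Pr : prob_space) (A : nat -> Pr -> Prop) :
  (forall n, measurable Pr (A n)) -> measurable Pr (fun w => forall n, A n w).
Proof.
  intros H. apply (meas_ext Pr (fun w => ~ exists n, ~ A n w)).
  - intros w; split.
    + intros H1 n. apply NNPP; intros H2; apply H1; eauto.
    + intros H1 [n Hn]; auto.
  - apply meas_compl, meas_union; intros n; apply meas_compl, H.
Qed.

Lemma meas_or (Pr : prob_space) (A B : Pr -> Prop) :
  measurable Pr A -> measurable Pr B -> measurable Pr (fun w => A w \/ B w).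
Proof.
  intros HA HB.
  apply (meas_ext Pr (fun w => exists n : nat, (if Nat.eqb n 0 then A else B) w)).
  - intros w; split.
    + intros [[|n] Hn]; simpl in Hn; auto.
    + intros [H|H]; [exists 0%nat | exists 1%nat]; auto.
  - apply meas_union; intros [|n]; simpl; auto.
Qed.

Lemma meas_and (Pr : prob_space) (A B : Pr -> Prop) :
  measurable Pr A -> measurable Pr B -> measurable Pr (fun w => A w /\ B w).
Proof.
  intros HA HB. apply (meas_ext Pr (fun w => ~ (~ A w \/ ~ B w))).
  - intros w; tauto.
  - apply meas_compl, meas_or; apply meas_compl; auto.
Qed.

Lemma meas_const_and (Pr : prob_space) (c : Prop) (A : Pr -> Prop) :
  measurable Pr A -> measurable Pr (fun w => c /\ A w).
Proof.
  intros HA. destruct (classic c) as [Hc|Hc].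
  - apply (meas_ext Pr A); [|auto]. intros w; tauto.
  - apply (meas_ext Pr (fun _ => False)); [|apply meas_empty]. intros w; tauto.
Qed.

Lemma meas_const_imp (Pr : prob_space) (c : Prop) (A : Pr -> Prop) :
  measurable Pr A -> measurable Pr (fun w => c -> A w).
Proof.
  intros HA. destruct (classic c) as [Hc|Hc].
  - apply (meas_ext Pr A); [|auto]. intros w; tauto.
  - apply (meas_ext Pr (fun _ => True)); [|apply meas_full]. intros w; tauto.
Qed.

Lemma sum_const c n : sum_f_R0 (fun _ => c) n = INR (S n) * c.
Proof.
  induction n; simpl sum_f_R0. simpl; ring.
  rewrite IHn. rewrite (S_INR (S n)). ring.
Qed.

Lemma infsum_eventually f l c N0 :
  infinite_sum f l -> (forall n, (n >= N0)%nat -> sum_f_R0 f n = c) -> l = c.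
Proof.
  intros H Hc. destruct (Req_dec l c) as [|Hne]; auto. exfalso.
  destruct (H (Rabs (l - c))) as [N HN].
  { apply Rabs_pos_lt; lra. }
  specialize (HN (N + N0)%nat ltac:(lia)). rewrite Hc in HN by lia.
  unfold Rdist in HN. rewrite Rabs_minus_sym in HN. lra.
Qed.

Lemma P_empty (Pr : prob_space) : P Pr (fun _ => False) = 0.
Proof.
  pose proof (P_sigma_additive Pr (fun _ _ => False) (fun _ => meas_empty Pr)
    ltac:(intros; auto)) as H. cbv beta in H.
  rewrite (P_ext Pr (fun w => exists n : nat, False) (fun _ => False)) in H
    by (intros; split; [intros [_ []] | tauto]).
  set (c := P Pr (fun _ => False)) in *.
  assert (Hc : 0 <= c) by apply P_nonneg, meas_empty.
  destruct (Req_dec c 0) as [|Hne]; auto. exfalso.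
  destruct (H c) as [N HN]; [lra|].
  specialize (HN (S N) ltac:(lia)). rewrite sum_const in HN.
  unfold Rdist in HN. rewrite Rabs_right in HN.
  - rewrite !S_INR in HN. pose proof (pos_INR N). nra.
  - rewrite !S_INR. pose proof (pos_INR N). nra.
Qed.

Lemma P_add (Pr : prob_space) (A B : Pr -> Prop) :
  measurable Pr A -> measurable Pr B -> (forall w, A w -> B w -> False) ->
  P Pr (fun w => A w \/ B w) = P Pr A + P Pr B.
Proof.
  intros HA HB Hd.
  set (S := fun n : nat => match n with 0%nat => A | 1%nat => B | _ => fun _ : Pr => False end).
  assert (HS : forall n, measurable Pr (S n)).
  { intros [|[|n]]; simpl; auto using meas_empty. }
  pose proof (P_sigma_additive Pr S HS) as H.
  assert (Hdis : forall n m w, n <> m -> S n w -> S m w -> False).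
  { intros [|[|n]] [|[|m]] w Hnm; simpl; try tauto; try lia; eauto. }
  specialize (H Hdis).
  rewrite (P_ext Pr _ (fun w => A w \/ B w)) in H.
  2:{ intros w; split.
      - intros [[|[|n]] Hn]; simpl in Hn; tauto.
      - intros [Hw|Hw]; [exists 0%nat|exists 1%nat]; auto. }
  apply (infsum_eventually _ _ _ 1%nat H).
  intros n Hn. destruct n as [|n]; [lia|]. clear Hn.
  induction n.
  - simpl. reflexivity.
  - change (sum_f_R0 (fun n0 : nat => P Pr (S n0)) (Datatypes.S (Datatypes.S n)))
      with (sum_f_R0 (fun n0 : nat => P Pr (S n0)) (Datatypes.S n) + P Pr (fun _ => False)).
    rewrite IHn, P_empty. ring.
Qed.

Lemma P_mono (Pr : prob_space) (A B : Pr -> Prop) :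
  measurable Pr A -> measurable Pr B -> (forall w, A w -> B w) -> P Pr A <= P Pr B.
Proof.
  intros HA HB H.
  rewrite (P_ext Pr B (fun w => A w \/ (B w /\ ~ A w))).
  2:{ intros w; split; [|intros [?|[? ?]]; auto]. intros Hb. destruct (classic (A w)); tauto. }
  rewrite P_add; auto.
  - pose proof (P_nonneg Pr (fun w => B w /\ ~ A w) (meas_and _ _ _ HB (meas_compl _ _ HA))). lra.
  - apply meas_and; auto; apply meas_compl; auto.
  - intros w ? [? ?]; auto.
Qed.

Lemma P_le1 (Pr : prob_space) (A : Pr -> Prop) : measurable Pr A -> P Pr A <= 1.
Proof.
  intros HA. rewrite <- (P_full Pr). apply P_mono; auto. apply meas_full.
Qed.

Lemma P_compl (Pr : prob_space) (A : Pr -> Prop) :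
  measurable Pr A -> P Pr (fun w => ~ A w) = 1 - P Pr A.
Proof.
  intros HA. rewrite <- (P_full Pr).
  rewrite (P_ext Pr (fun _ => True) (fun w => A w \/ ~ A w)) by (intros w; split; [intros; apply classic | auto]).
  rewrite P_add; auto. ring. apply meas_compl; auto.
Qed.

Lemma P_sub (Pr : prob_space) (A B : Pr -> Prop) :
  measurable Pr A -> measurable Pr B -> P Pr (fun w => A w \/ B w) <= P Pr A + P Pr B.
Proof.
  intros HA HB.
  rewrite (P_ext Pr _ (fun w => A w \/ (B w /\ ~ A w))).
  2:{ intros w; split; [|intros [?|[? ?]]; auto]. intros [Ha|Hb]; auto. destruct (classic (A w)); tauto. }
  rewrite P_add; auto.
  - pose proof (P_mono Pr (fun w => B w /\ ~ A w) B (meas_and _ _ _ HB (meas_compl _ _ HA)) HB (fun w H => proj1 H)). lra.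
  - apply meas_and; auto; apply meas_compl; auto.
  - intros w ? [? ?]; auto.
Qed.
Lemma incr_le (Pr : prob_space) (A : nat -> Pr -> Prop) :
  (forall n w, A n w -> A (S n) w) -> forall n m w, (n <= m)%nat -> A n w -> A m w.
Proof.
  intros H n m w Hnm. induction Hnm; auto.
Qed.

Lemma cont_below (Pr : prob_space) (A : nat -> Pr -> Prop) :
  (forall n, measurable Pr (A n)) -> (forall n w, A n w -> A (S n) w) ->
  Un_cv (fun n => P Pr (A n)) (P Pr (fun w => exists n, A n w)).
Proof.
  intros HA Hinc.
  set (D := fun n : nat => match n with 0%nat => A 0%nat | S k => fun w => A (S k) w /\ ~ A k w end).
  assert (HD : forall n, measurable Pr (D n)).
  { intros [|n]; simpl; auto. apply meas_and; auto. apply meas_compl; auto. }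
  assert (HDA : forall n w, D n w -> A n w). { intros [|n] w; simpl; tauto. }
  assert (Hlt : forall n m w, (n < m)%nat -> D n w -> D m w -> False).
  { intros n [|m] w Hnm Hn Hm; [lia|]. simpl in Hm. destruct Hm as [_ Hm]. apply Hm.
    apply (incr_le Pr A Hinc n); [lia|]. auto. }
  assert (Hdis : forall n m w, n <> m -> D n w -> D m w -> False).
  { intros n m w Hnm Hn Hm. destruct (Nat.lt_total n m) as [H|[H|H]]; [eauto|lia|eauto]. }
  pose proof (P_sigma_additive Pr D HD Hdis) as Hs.
  rewrite (P_ext Pr _ (fun w => exists n, A n w)) in Hs.
  2:{ intros w; split.
      - intros [n Hn]; eauto.
      - intros [n Hn]. induction n.
        + exists 0%nat; auto.
        + destruct (classic (A n w)) as [H|H]; auto. exists (S n); simpl; auto. }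
  assert (Hsum : forall n, sum_f_R0 (fun k => P Pr (D k)) n = P Pr (A n)).
  { induction n; simpl sum_f_R0; [reflexivity|]. rewrite IHn.
    rewrite (P_ext Pr (A (S n)) (fun w => A n w \/ D (S n) w)).
    - rewrite P_add; auto. intros w H1 H2; simpl in H2; tauto.
    - intros w; split.
      + intros H. destruct (classic (A n w)); auto. right; simpl; auto.
      + intros [H|H]; auto; simpl in H; tauto. }
  intros eps Heps. destruct (Hs eps Heps) as [N HN]. exists N. intros n Hn.
  rewrite <- Hsum. auto.
Qed.

Lemma null_union (Pr : prob_space) (A : nat -> Pr -> Prop) :
  (forall n, measurable Pr (A n)) -> (forall n, P Pr (A n) = 0) ->
  P Pr (fun w => exists n, A n w) = 0.
Proof.
  intros HA H0.
  set (F := fun n w => exists k, (k <= n)%nat /\ A k w).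
  assert (HF : forall n, measurable Pr (F n)).
  { intros n. apply meas_union. intros k. apply meas_const_and; auto. }
  assert (HF0 : forall n, P Pr (F n) = 0).
  { induction n.
    - rewrite (P_ext Pr _ (A 0%nat)); auto.
      intros w; split; [intros [k [Hk Hw]]; replace k with 0%nat in Hw by lia; auto|].
      intros Hw; exists 0%nat; auto.
    - rewrite (P_ext Pr _ (fun w => F n w \/ A (S n) w)).
      + pose proof (P_sub Pr _ _ (HF n) (HA (S n))).
        pose proof (P_nonneg Pr _ (meas_or _ _ _ (HF n) (HA (S n)))). rewrite IHn, H0 in *. lra.
      + intros w; split.
        * intros [k [Hk Hw]]. destruct (Nat.eq_dec k (S n)) as [->|]; auto.
          left; exists k; split; auto; lia.
        * intros [[k [Hk Hw]]|Hw]; [exists k|exists (S n)]; split; auto; lia. }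
  pose proof (cont_below Pr F HF) as Hc.
  assert (Hinc : forall n w, F n w -> F (S n) w).
  { intros n w [k [Hk Hw]]; exists k; split; auto; lia. }
  specialize (Hc Hinc).
  rewrite (P_ext Pr _ (fun w => exists n, F n w)).
  2:{ intros w; split; [intros [n Hn]; exists n, n; auto | intros [n [k [_ Hk]]]; eauto]. }
  apply (UL_sequence (fun n => P Pr (F n))); auto.
  intros eps Heps; exists 0%nat; intros n _; rewrite HF0; unfold Rdist; rewrite Rminus_0_r, Rabs_R0; auto.
Qed.

Definition zdec (n : nat) : Z := let (a, b) := Cantor.of_nat n in (Z.of_nat a - Z.of_nat b)%Z.

Lemma zdec_surj z : exists n, zdec n = z.
Proof.
  exists (Cantor.to_nat (Z.to_nat z, Z.to_nat (- z))). unfold zdec.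
  rewrite Cantor.cancel_of_to. lia.
Qed.

Fixpoint dec (d n : nat) : nat -> Z :=
  match d with
  | 0%nat => fun _ => 0%Z
  | S d' => let (a, b) := Cantor.of_nat n in
            fun i => match i with 0%nat => zdec a | S i' => dec d' b i' end
  end.

Lemma dec_surj d : forall f : nat -> Z, exists n, forall i, (i < d)%nat -> dec d n i = f i.
Proof.
  induction d; intros f.
  - exists 0%nat; intros; lia.
  - destruct (zdec_surj (f 0%nat)) as [a Ha].
    destruct (IHd (fun i => f (S i))) as [b Hb].
    exists (Cantor.to_nat (a, b)). intros i Hi. cbn [dec]. rewrite Cantor.cancel_of_to.
    destruct i; auto. apply Hb; lia.
Qed.

Lemma Zd_countable d : exists e : nat -> Zd d, forall t, exists n, e n = t.
Proof.
  exists (fun n (i : fin d) => dec d n (proj1_sig i)).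
  intros t.
  set (f := fun i => match lt_dec i d with left p => t (exist _ i p) | right _ => 0%Z end).
  destruct (dec_surj d f) as [n Hn]. exists n.
  apply functional_extensionality. intros [i p]. simpl. rewrite Hn by auto.
  unfold f. destruct (lt_dec i d) as [q|q]; [|contradiction].
  f_equal. f_equal. apply proof_irrelevance.
Qed.

Lemma meas_exists_Zd (Pr : prob_space) d (X : Zd d -> Pr -> Prop) :
  (forall t, measurable Pr (X t)) -> measurable Pr (fun w => exists t, X t w).
Proof.
  intros H. destruct (Zd_countable d) as [e He].
  apply (meas_ext Pr (fun w => exists n, X (e n) w)).
  - intros w; split; [intros [n Hn]; eauto|]. intros [t Ht]. destruct (He t) as [n <-]; eauto.
  - apply meas_union; auto.
Qed.

Lemma meas_forall_Zd (Pr : prob_space) d (X : Zd d -> Pr -> Prop) :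
  (forall t, measurable Pr (X t)) -> measurable Pr (fun w => forall t, X t w).
Proof.
  intros H. apply (meas_ext Pr (fun w => ~ exists t, ~ X t w)).
  - intros w; split.
    + intros H1 t. apply NNPP; intros H2; apply H1; eauto.
    + intros H1 [t Ht]; auto.
  - apply meas_compl, meas_exists_Zd; intros t; apply meas_compl, H.
Qed.
Lemma cv_limsup a l : Un_cv a l -> is_limsup a l.
Proof.
  intros H eps Heps. destruct (H eps Heps) as [N HN]. split.
  - exists N. intros n Hn. specialize (HN n Hn). unfold Rdist in HN.
    apply Rabs_def2 in HN. lra.
  - intros N'. exists (N + N')%nat. split; [lia|].
    specialize (HN (N + N')%nat ltac:(lia)). unfold Rdist in HN.
    apply Rabs_def2 in HN. lra.
Qed.

Lemma limsup_unique a l l' : Un_cv a l -> is_limsup a l' -> l = l'.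
Proof.
  intros H1 H2. destruct (Rtotal_order l l') as [Hl|[Hl|Hl]]; auto; exfalso.
  - destruct (H1 ((l' - l) / 2)) as [N HN]; [lra|].
    destruct (H2 ((l' - l) / 2)) as [_ H]; [lra|].
    destruct (H N) as [n [Hn Hb]]. specialize (HN n Hn). unfold Rdist in HN.
    apply Rabs_def2 in HN. lra.
  - destruct (H1 ((l - l') / 2)) as [N HN]; [lra|].
    destruct (H2 ((l - l') / 2)) as [[N2 H] _]; [lra|].
    specialize (HN (N + N2)%nat ltac:(lia)). specialize (H (N + N2)%nat ltac:(lia)).
    unfold Rdist in HN. apply Rabs_def2 in HN. lra.
Qed.

Lemma nat_above x : exists M : nat, x < INR M.
Proof.
  destruct (archimed x) as [H _]. exists (Z.to_nat (up x)).
  destruct (Z_le_gt_dec 0 (up x)) as [Hz|Hz].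
  - rewrite INR_IZR_INZ, Z2Nat.id; auto.
  - apply Z.gt_lt, IZR_lt in Hz. pose proof (pos_INR (Z.to_nat (up x))). lra.
Qed.

Definition Tc {Pr : prob_space} {d} (N : Rd d -> R) (V : Zd d -> Pr -> R) (w : Pr) : Prop :=
  forall k : nat, exists M : nat, forall t, INR M < N (Zd_to_Rd t) -> V t w <= / INR (S k).

Definition Aev {Pr : prob_space} {d} (N : Rd d -> R) (V : Zd d -> Pr -> R) (delta : R) (m : nat) (w : Pr) : Prop :=
  exists t, INR m <= N (Zd_to_Rd t) /\ delta < V t w.

Lemma invS_pos k : 0 < / INR (S k).
Proof. apply Rinv_0_lt_compat, lt_0_INR; lia. Qed.

Lemma small_inv delta : 0 < delta -> exists k, / INR (S k) < delta.
Proof.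
  intros H. destruct (archimed_cor1 delta H) as [K [HK HK0]].
  exists (K - 1)%nat. replace (S (K - 1)) with K by lia. auto.
Qed.

Lemma T_Tc (Pr : prob_space) d (V : Zd d -> Pr -> R) N (Hnn : forall t w, 0 <= V t w) w :
  tends_to_zero_at_infinity N (fun t => V t w) <-> Tc N V w.
Proof.
  split.
  - intros H k. destruct (H (/ INR (S k)) (invS_pos k)) as [M0 HM0].
    destruct (nat_above M0) as [M HM]. exists M. intros t Ht.
    specialize (HM0 t ltac:(lra)). cbv beta in HM0. pose proof (Rle_abs (V t w)). lra.
  - intros H eps Heps. destruct (small_inv eps Heps) as [k Hk].
    destruct (H k) as [M HM]. exists (INR M). intros t Ht.
    rewrite Rabs_pos_eq by auto. specialize (HM t Ht). lra.
Qed.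

Lemma meas_gt (Pr : prob_space) d (V : Zd d -> Pr -> R) (HV : random_field Pr V) t delta :
  measurable Pr (fun w => delta < V t w).
Proof.
  apply (meas_ext Pr (fun w => ~ V t w <= delta)).
  - intros w; split; [apply Rnot_le_lt|]. intros H1 H2; lra.
  - apply meas_compl, HV.
Qed.

Lemma meas_Tc (Pr : prob_space) d (V : Zd d -> Pr -> R) (HV : random_field Pr V) N :
  measurable Pr (Tc N V).
Proof.
  unfold Tc. apply meas_inter. intros k. apply meas_union. intros M.
  apply meas_forall_Zd. intros t. apply meas_const_imp. apply HV.
Qed.

Lemma meas_Aev (Pr : prob_space) d (V : Zd d -> Pr -> R) (HV : random_field Pr V) N delta m :
  measurable Pr (Aev N V delta m).
Proof.
  apply meas_exists_Zd. intros t. apply meas_const_and. apply meas_gt; auto.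
Qed.

Lemma meas_max (Pr : prob_space) d (V : Zd d -> Pr -> R) (HV : random_field Pr V) N m r delta :
  measurable Pr (max_exceeds N V m r delta).
Proof.
  apply meas_exists_Zd. intros t. apply meas_const_and. apply meas_gt; auto.
Qed.

Lemma key_cv (Pr : prob_space) d (V : Zd d -> Pr -> R) (HV : random_field Pr V) N
  (r : nat -> Z) (Hmono : forall n, (r n <= r (S n))%Z)
  (Hinf : forall K : Z, exists n0, forall n, (n >= n0)%nat -> (K <= r n)%Z) delta m :
  Un_cv (fun n => P Pr (max_exceeds N V m (r n) delta)) (P Pr (Aev N V delta m)).
Proof.
  rewrite (P_ext Pr _ (fun w => exists n, max_exceeds N V m (r n) delta w)).
  - apply cont_below.
    + intros n; apply meas_max; auto.
    + intros n w [t [[H1 H2] H3]]. exists t. split; auto. split; auto.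
      pose proof (IZR_le _ _ (Hmono n)). lra.
  - intros w; split.
    + intros [t [H1 H2]]. destruct (archimed (N (Zd_to_Rd t))) as [Hu _].
      destruct (Hinf (up (N (Zd_to_Rd t)))) as [n0 Hn0].
      exists n0, t. split; auto. split; auto. specialize (Hn0 n0 (le_n _)).
      apply IZR_le in Hn0. lra.
    + intros [n [t [[H1 H2] H3]]]. exists t; auto.
Qed.

Theorem lemmaA4 (Pr : prob_space) (d : nat) (V : Zd d -> Pr -> R)
  (HV : random_field Pr V) (Hnn : forall t w, 0 <= V t w)
  (N : Rd d -> R) (HN : is_norm N) :
  P Pr (fun w => tends_to_zero_at_infinity N (fun t => V t w)) = 1
  <->
  exists r : nat -> Z,
    (forall n, (r n <= r (S n))%Z) /\
    (forall K : Z, exists n0, forall n, (n >= n0)%nat -> (K <= r n)%Z) /\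
    forall delta, 0 < delta ->
      exists L : nat -> R,
        (forall m, is_limsup (fun n => P Pr (max_exceeds N V m (r n) delta)) (L m)) /\
        Un_cv L 0.
Proof.
  rewrite (P_ext Pr _ (Tc N V)) by (intros w; apply T_Tc; auto).
  pose proof (meas_Tc Pr d V HV N) as HT.
  split.
  - intros H1. exists (fun n => Z.of_nat n).
    assert (Hm : forall n, (Z.of_nat n <= Z.of_nat (S n))%Z) by (intros; lia).
    assert (Hi : forall K : Z, exists n0, forall n, (n >= n0)%nat -> (K <= Z.of_nat n)%Z).
    { intros K; exists (Z.to_nat K); intros; lia. }
    split; auto. split; auto. intros delta Hd.
    exists (fun m => P Pr (Aev N V delta m)). split.
    + intros m. apply cv_limsup. apply key_cv; auto.
    + assert (Hc := cont_below Pr (fun m w => ~ Aev N V delta m w)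
         (fun m => meas_compl _ _ (meas_Aev Pr d V HV N delta m))).
      assert (Hinc : forall m w, ~ Aev N V delta m w -> ~ Aev N V delta (S m) w).
      { intros m w H [t [Ht1 Ht2]]. apply H. exists t. split; auto. rewrite S_INR in Ht1. lra. }
      specialize (Hc Hinc).
      assert (Hmu : forall n, measurable Pr (fun w => ~ Aev N V delta n w))
        by (intros; apply meas_compl, meas_Aev; auto).
      assert (H1' : P Pr (fun w => exists n, ~ Aev N V delta n w) = 1).
      { apply Rle_antisym.
        - apply P_le1, meas_union; auto.
        - rewrite <- H1. apply P_mono; auto. apply meas_union; auto.
          intros w Hw. destruct (small_inv delta Hd) as [k Hk].
          destruct (Hw k) as [M HM]. exists (S M). intros [t [Ht1 Ht2]].
          rewrite S_INR in Ht1. specialize (HM t ltac:(lra)). lra. }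
      cbv beta in Hc. rewrite H1' in Hc.
      intros eps Heps. destruct (Hc eps Heps) as [K HK]. exists K. intros n Hn.
      specialize (HK n Hn). cbv beta in HK. rewrite P_compl in HK by (apply meas_Aev; auto).
      unfold Rdist in *. replace (P Pr (Aev N V delta n) - 0) with (- (1 - P Pr (Aev N V delta n) - 1)) by ring.
      rewrite Rabs_Ropp. auto.
  - intros [r [Hmono [Hinf Hdel]]].
    assert (Hnull : forall delta, 0 < delta -> P Pr (fun w => forall m, Aev N V delta m w) = 0).
    { intros delta Hd. destruct (Hdel delta Hd) as [L [HL HLcv]].
      assert (HLe : forall m, L m = P Pr (Aev N V delta m)).
      { intros m. symmetry. eapply limsup_unique; [apply key_cv; auto | apply HL]. }
      assert (Hmi : measurable Pr (fun w => forall m, Aev N V delta m w))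
        by (apply meas_inter; intros; apply meas_Aev; auto).
      assert (Hle : forall m, P Pr (fun w => forall m, Aev N V delta m w) <= L m).
      { intros m. rewrite HLe. apply P_mono; auto. apply meas_Aev; auto. }
      pose proof (P_nonneg Pr _ Hmi).
      destruct (Req_dec (P Pr (fun w => forall m, Aev N V delta m w)) 0) as [|Hne]; auto.
      exfalso. destruct (HLcv (P Pr (fun w => forall m, Aev N V delta m w))) as [K HK]; [lra|].
      specialize (HK K (le_n _)). specialize (Hle K). unfold Rdist in HK.
      rewrite Rminus_0_r in HK. pose proof (Rle_abs (L K)). lra. }
    assert (Hu : P Pr (fun w => exists k, forall m, Aev N V (/ INR (S k)) m w) = 0).
    { apply null_union.
      - intros k; apply meas_inter; intros; apply meas_Aev; auto.
      - intros k; apply Hnull, invS_pos. }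
    assert (Hc : P Pr (fun w => ~ Tc N V w) = 0).
    { apply Rle_antisym.
      - rewrite <- Hu. apply P_mono.
        + apply meas_compl; auto.
        + apply meas_union; intros k; apply meas_inter; intros; apply meas_Aev; auto.
        + intros w Hw. unfold Tc in Hw. apply not_all_ex_not in Hw. destruct Hw as [k Hk].
          exists k. intros m. pose proof (not_ex_all_not _ _ Hk m) as Hm.
          apply not_all_ex_not in Hm. destruct Hm as [t Ht].
          apply imply_to_and in Ht. destruct Ht as [Ht1 Ht2].
          exists t. split; [lra|]. apply Rnot_le_lt; auto.
      - apply P_nonneg, meas_compl; auto. }
    rewrite P_compl in Hc by auto. lra.
Qed.
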